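(* Let $F$ be a field and let $f=\sum_{\sigma\in S_d}\lambda_\sigma x_{\sigma(1)}\cdots x_{\sigma(d)}\in F\langle X\rangle$ be a multilinear polynomial of degree $d\ge 2$ such that $\sum_{\sigma\in S_d}\lambda_\sigma=0$ and $\sum_{\sigma\in S_d,\ \sigma^{-1}(1)<\sigma^{-1}(2)}\lambda_\sigma\neq 0$. Let $\mathcal A$ be a unital $F$-algebra and let $\phi:\mathcal A\to\mathcal A$ be a linear map that preserves zeros of $f$ and satisfies $\phi(1)\in F^*\cdot 1$. If $a,b\in\mathcal A$ satisfy $ab=ba=0$, then $\phi(a)\phi(b)=\phi(b)\phi(a)$.
   Context: $F\langle X\rangle$ is the free algebra over $F$ in noncommuting indeterminates $x_1,x_2,\ldots$. A map $\phi$ on an $F$-algebra $\mathcal A$ preserves zeros of $f$ if for all $a_1,\ldots,a_d\in\mathcal A$, $f(a_1,\ldots,a_d)=0$ implies $f(\phi(a_1),\ldots,\phi(a_d))=0$. *)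

(* Defs.v *)
From HB Require Import structures.
From mathcomp Require Import all_boot all_order all_algebra all_fingroup.
Set Implicit Arguments. Unset Strict Implicit. Unset Printing Implicit Defensive.
Import GRing.Theory.
Local Open Scope ring_scope.

(* Evaluation of the multilinear polynomial
   f = sum_{s in S_d} lam_s x_{s(1)} ... x_{s(d)}  at (a_1,...,a_d).
   Indices are 0-based: x_{s(i)} for i = 0..d-1, product taken in increasing i. *)
Definition mlin_eval (F : fieldType) (A : algType F) (d : nat)
  (lam : 'S_d -> F) (a : 'I_d -> A) : A :=
  \sum_(s : 'S_d) lam s *: \prod_(i < d) a (s i).

Definition preserves_zeros (F : fieldType) (A : algType F) (d : nat)
  (lam : 'S_d -> F) (phi : A -> A) : Prop :=
  forall a : 'I_d -> A, mlin_eval lam a = 0 -> mlin_eval lam (fun i => phi (a i)) = 0.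

(* Main.v *)
Require Import Defs.
From HB Require Import structures.
From mathcomp Require Import all_boot all_order all_algebra all_fingroup zify.
Import GRing.Theory.
Local Open Scope ring_scope.

Lemma prodW (F : fieldType) (A : algType F) (x y : A) (c : F) (p q : nat) : p != q -> forall m,
 \prod_(0 <= i < m) (if i == p then x else if i == q then y else c%:A) =
 c ^+ (m - (p < m) - (q < m))%N *: (if ((p < m) && (q < m))%N then (if (p < q)%N then x * y else y * x)
    else if (p < m)%N then x else if (q < m)%N then y else 1).
Proof.
move=> pq; elim=> [|m IH]; first by rewrite big_nil /= expr0 scale1r.
have E r : (r < m.+1)%N = (r == m) || (r < m)%N by rewrite ltnS leq_eqVlt.
rewrite big_nat_recr //= IH !E.
case: (eqVneq m p) => [mp|mp].
  subst m; rewrite ltnn /= (eq_sym q p) (negbTE pq) /=.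
  case: (ltnP q p) => Hqp /=.
    by rewrite (ltnNge p q) (ltnW Hqp) /= -scalerAl subSS subn0.
  by rewrite -scalerAl mul1r subSS !subn0.
rewrite ?(eq_sym p m) ?(negbTE mp) /=.
case: (eqVneq m q) => [mq|mq].
  subst m; rewrite ltnn /= ?andbT ?orbT andbF.
  case: (ltnP p q) => Hpq /=; rewrite -scalerAl ?mul1r;
    by congr (c ^+ _ *: _); lia.
rewrite ?(eq_sym q m) ?(negbTE mq) /= mulr_algr scalerA -exprS.
congr (_ ^+ _ *: _).
case: (ltnP p m); case: (ltnP q m) => //=; lia.
Qed.

Lemma perm_eq_inv (N : nat) (s : 'S_N) (i j : 'I_N) : (s i == j) = (i == (s^-1)%g j).
Proof. by apply/eqP/eqP => [<-|->]; rewrite ?permK ?permKV. Qed.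

Lemma prodS (F : fieldType) (A : algType F) (n : nat) (x y : A) (c : F) (s : 'S_n.+2)
  (u : 'I_n.+2 -> A)
  (hu : forall i, u i = if i == ord0 then x else if i == inord 1 then y else c%:A) :
  \prod_(i < n.+2) u (s i) = c ^+ n *:
    (if ((s^-1)%g (ord0 : 'I_n.+2) < (s^-1)%g (inord 1 : 'I_n.+2))%N then x * y else y * x).
Proof.
set p := (s^-1)%g (ord0 : 'I_n.+2); set q := (s^-1)%g (inord 1 : 'I_n.+2).
have pq : (val p != val q).
  apply/negP => /eqP /val_inj /(congr1 s); rewrite /p /q !permKV => /(congr1 val).
  by rewrite /= inordK.
have -> : \prod_(i < n.+2) u (s i) = \prod_(0 <= k < n.+2)
   (if k == val p then x else if k == val q then y else c%:A).
  rewrite big_mkord; apply: eq_bigr => i _; rewrite hu !perm_eq_inv /p /q.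
  by rewrite -!(inj_eq val_inj).
rewrite prodW // !ltn_ord /=.
by rewrite subSS subn1.
Qed.

(* degree d >= 2 is written n.+2; indices 0,1 stand for 1,2 of the paper *)
Theorem lemma3p4 (F : fieldType) (A : algType F) (n : nat)
  (lam : 'S_n.+2 -> F)
  (hsum : \sum_(s : 'S_n.+2) lam s = 0)
  (hsum12 : \sum_(s : 'S_n.+2 | ((s^-1)%g (ord0 : 'I_n.+2) < (s^-1)%g (inord 1 : 'I_n.+2))%N) lam s != 0)
  (phi : {linear A -> A})
  (hphi : preserves_zeros lam phi)
  (h1 : exists2 c : F, c != 0 & phi 1 = c%:A)
  (a b : A) (hab : a * b = 0) (hba : b * a = 0) :
  phi a * phi b = phi b * phi a.
Proof.
case: h1 => c c0 hc.
pose u (x y : A) (k : F) (i : 'I_n.+2) := if i == ord0 then x else if i == inord 1 then y else k%:A.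
have H0 : mlin_eval lam (u a b 1) = 0.
  rewrite /mlin_eval big1 // => s _.
  rewrite (@prodS _ _ _ a b 1 s (u a b 1)) //.
  by case: ifP; rewrite ?hab ?hba !scaler0.
have := @hphi _ H0.
have hu : forall i, phi (u a b 1 i) = u (phi a) (phi b) c i.
  move=> i; rewrite /u; case: ifP => // _; case: ifP => // _.
  by rewrite scale1r hc.
rewrite /mlin_eval.
under eq_bigr => s _ do rewrite (@prodS _ _ _ (phi a) (phi b) c s (fun i => phi (u a b 1 i)) hu).
set P := fun s : 'S_n.+2 => ((s^-1)%g (ord0 : 'I_n.+2) < (s^-1)%g (inord 1 : 'I_n.+2))%N.
rewrite (bigID P) /=.
rewrite (@eq_bigr _ _ _ _ _ P _ (fun s => (lam s * c ^+ n) *: (phi a * phi b))); last first.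
  by move=> s Ps; rewrite ifT // scalerA.
rewrite [X in _ + X](@eq_bigr _ _ _ _ _ _ _ (fun s => (lam s * c ^+ n) *: (phi b * phi a))); last first.
  by move=> s; rewrite /P => Ps; rewrite (negbTE Ps) scalerA.
rewrite -!scaler_suml -!mulr_suml.
move: hsum; rewrite (bigID P) /= => /eqP; rewrite addrC addr_eq0 => /eqP ->.
rewrite mulNr scaleNr -scalerBr => /eqP.
rewrite scaler_eq0 mulf_eq0 expf_eq0 (negbTE c0) andbF /= (negbTE hsum12) /=.
by rewrite subr_eq0 => /eqP.
Qed.
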